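(* Let $(\mathfrak g,[\cdot,\cdot],\alpha,\varepsilon,B)$ be a quadratic multiplicative color Hom-Lie algebra, $\rho$ a representation of $\mathfrak g$ on $(M,\beta)$ with $\alpha^2=\mathrm{id}$ and $\beta^2=\mathrm{id}$, and assume that $\tilde\rho$, $\tilde\rho(x)(f)=-\varepsilon(x,f)\,f\circ\rho(x)$, is a representation of $\mathfrak g$ on $(M^*,\tilde\beta)$, $\tilde\beta(f)=f\circ\beta$. Let $\mathscr D:M\otimes M^*\to\mathfrak g$ be the even linear map defined by $B(x,\mathscr D(m\otimes f))=\langle\rho(\alpha(x))(m),f\rangle$ for all $x\in\mathfrak g$, where $\langle n,f\rangle=\varepsilon(n,f)f(n)$ for homogeneous $n,f$. Then for all homogeneous $x\in\mathfrak g$, $m\in M$, $f\in M^*$: $[x,\mathscr D(m\otimes f)]=\mathscr D\big(\rho(x)(m)\otimes\tilde\beta(f)+\varepsilon(x,m)\,\beta(m)\otimes\tilde\rho(x)(f)\big)$.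
   Context: $\mathbb K$ is a field of characteristic zero and $\Gamma$ an abelian group. A bicharacter is a map $\varepsilon:\Gamma\times\Gamma\to\mathbb K\setminus\{0\}$ with $\varepsilon(a,b)\varepsilon(b,a)=1$, $\varepsilon(a,b+c)=\varepsilon(a,b)\varepsilon(a,c)$, $\varepsilon(a+b,c)=\varepsilon(a,c)\varepsilon(b,c)$; for homogeneous elements $\varepsilon(x,y)=\varepsilon(\deg x,\deg y)$. A color Hom-Lie algebra $(\mathfrak g,[\cdot,\cdot],\alpha,\varepsilon)$: $\Gamma$-graded space, even bilinear bracket, even linear $\alpha$, with $[x,y]=-\varepsilon(x,y)[y,x]$ and $\varepsilon(z,x)[\alpha(x),[y,z]]+\varepsilon(x,y)[\alpha(y),[z,x]]+\varepsilon(y,z)[\alpha(z),[x,y]]=0$; multiplicative means $\alpha([x,y])=[\alpha(x),\alpha(y)]$; quadratic means equipped with a nondegenerate bilinear form $B$ that is $\varepsilon$-symmetric ($B(x,y)=\varepsilon(x,y)B(y,x)$), invariant ($B([x,y],z)=B(x,[y,z])$), with $B(\alpha(x),y)=B(x,\alpha(y))$. A representation of a multiplicative $\mathfrak g$ on $(M,\beta)$ is an even linear $\rho:\mathfrak g\to\mathfrak{gl}(M)$ with $\rho([x,y])\circ\beta=\rho(\alpha(x))\circ\rho(y)-\varepsilon(x,y)\rho(\alpha(y))\circ\rho(x)$ and $\beta\circ\rho(x)=\rho(\alpha(x))\circ\beta$. $M^*$ is the graded dual (degree-$\gamma$ forms vanish on $M_\delta$ for $\delta\ne-\gamma$). *)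

(* Defs.v *)
From mathcomp Require Import all_boot all_order all_algebra.
Set Implicit Arguments. Unset Strict Implicit. Unset Printing Implicit Defensive.
Import GRing.Theory.
Local Open Scope ring_scope.

Section ColorHomLie.
Variables (K : fieldType) (G : zmodType).

Definition is_bichar (eps : G -> G -> K) : Prop :=
  [/\ (forall a b, eps a b != 0),
      (forall a b, eps a b * eps b a = 1),
      (forall a b c, eps a (b + c) = eps a b * eps a c) &
      (forall a b c, eps (a + b) c = eps a c * eps b c)].

Definition lin (U V : lmodType K) (f : U -> V) : Prop :=
  forall k u v, f (k *: u + v) = k *: f u + f v.
Definition linK (U : lmodType K) (f : U -> K) : Prop :=
  forall k u v, f (k *: u + v) = k * f u + f v.

(* A G-grading of the K-vector space V: hom g v means "v is homogeneous of
   degree g" (i.e. v lies in V_g).  V is the direct sum of the subspaces V_g. *)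
Definition is_grading (V : lmodType K) (hom : G -> V -> Prop) : Prop :=
  [/\ (forall g, hom g 0),
      (forall g k u v, hom g u -> hom g v -> hom g (k *: u + v)),
      (forall (s : seq G) (v : G -> V), uniq s -> (forall g, hom g (v g)) ->
          \sum_(g <- s) v g = 0 -> forall g, g \in s -> v g = 0) &
      (forall x : V, exists (s : seq G) (v : G -> V),
          (forall g, hom g (v g)) /\ x = \sum_(g <- s) v g)].

Definition even_lin (U V : lmodType K) (homU : G -> U -> Prop)
  (homV : G -> V -> Prop) (f : U -> V) : Prop :=
  lin f /\ forall g u, homU g u -> homV g (f u).

Definition color_hom_lie (g : lmodType K) (hom : G -> g -> Prop)
  (br : g -> g -> g) (alpha : g -> g) (eps : G -> G -> K) : Prop :=
  [/\ is_bichar eps /\ is_grading hom,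
      ((forall x, lin (br x)) /\ (forall y, lin (br^~ y)) /\
       (forall a b x y, hom a x -> hom b y -> hom (a + b) (br x y))),
      even_lin hom hom alpha,
      (forall a b x y, hom a x -> hom b y -> br x y = - (eps a b *: br y x)) &
      (forall a b c x y z, hom a x -> hom b y -> hom c z ->
         eps c a *: br (alpha x) (br y z) + eps a b *: br (alpha y) (br z x)
         + eps b c *: br (alpha z) (br x y) = 0)].

Definition hom_multiplicative (g : lmodType K) (br : g -> g -> g) (alpha : g -> g) :=
  forall x y, alpha (br x y) = br (alpha x) (alpha y).

Definition quadratic_form (g : lmodType K) (hom : G -> g -> Prop)
  (br : g -> g -> g) (alpha : g -> g) (eps : G -> G -> K) (B : g -> g -> K) :=
  [/\ ((forall x, linK (B x)) /\ (forall y, linK (B^~ y))),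
      ((forall x, (forall y, B x y = 0) -> x = 0) /\
       (forall y, (forall x, B x y = 0) -> y = 0)),
      (forall a b x y, hom a x -> hom b y -> B x y = eps a b * B y x),
      (forall x y z, B (br x y) z = B x (br y z)) &
      (forall x y, B (alpha x) y = B x (alpha y))].

Definition representation (g : lmodType K) (hom : G -> g -> Prop)
  (br : g -> g -> g) (alpha : g -> g) (eps : G -> G -> K)
  (M : lmodType K) (homM : G -> M -> Prop) (rho : g -> M -> M) (beta : M -> M) :=
  [/\ is_grading homM,
      even_lin homM homM beta,
      ((forall k x y m, rho (k *: x + y) m = k *: rho x m + rho y m) /\ (forall x, lin (rho x)) /\
       (forall a b x m, hom a x -> homM b m -> homM (a + b) (rho x m))),
      (forall a b x y m, hom a x -> hom b y ->
         rho (br x y) (beta m) =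
         rho (alpha x) (rho y m) - eps a b *: rho (alpha y) (rho x m)) &
      (forall x m, beta (rho x m) = rho (alpha x) (beta m))].

(* Homogeneous elements of degree c of the graded dual M^* : linear forms
   M -> K vanishing on M_d for d <> -c. *)
Definition dual_hom (M : lmodType K) (homM : G -> M -> Prop) (c : G)
  (f : M -> K) : Prop :=
  linK f /\ (forall d n, d != - c -> homM d n -> f n = 0).

Definition tbeta (M : lmodType K) (beta : M -> M) (f : M -> K) : M -> K :=
  fun n => f (beta n).

(* tilde rho (x)(f) = - eps(x,f) f o rho(x), for x of degree a, f of degree c *)
Definition trho (g M : lmodType K) (eps : G -> G -> K) (rho : g -> M -> M)
  (a : G) (x : g) (c : G) (f : M -> K) : M -> K :=
  fun n => - (eps a c * f (rho x n)).

(* tilde rho is a representation of g on (M^*, tilde beta); stated on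
   homogeneous elements (the maps being extended (bi)linearly). *)
Definition dual_representation (g : lmodType K) (hom : G -> g -> Prop)
  (br : g -> g -> g) (alpha : g -> g) (eps : G -> G -> K)
  (M : lmodType K) (homM : G -> M -> Prop) (rho : g -> M -> M) (beta : M -> M) :=
  (forall a b c x y f, hom a x -> hom b y -> dual_hom homM c f ->
     forall n,
     trho eps rho (a + b) (br x y) c (tbeta beta f) n =
     trho eps rho a (alpha x) (b + c) (trho eps rho b y c f) n
     - eps a b * trho eps rho b (alpha y) (a + c) (trho eps rho a x c f) n) /\
  (forall a c x f, hom a x -> dual_hom homM c f ->
     forall n, tbeta beta (trho eps rho a x c f) n =
               trho eps rho a (alpha x) c (tbeta beta f) n).

End ColorHomLie.

(* Main.v *)
Require Import Defs.
From mathcomp Require Import all_boot all_order all_algebra.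
From mathcomp Require Import ring.
Import GRing.Theory.
Local Open Scope ring_scope.

Section H.
Variables (K : fieldType) (U : lmodType K) (f : U -> K).
Hypothesis hf : linK f.
Lemma linK0 : f 0 = 0.
Proof.
have := hf 1 0 0; rewrite scale1r addr0 mul1r => E.
by apply: (@addrI _ (f 0)); rewrite addr0 -E.
Qed.
Lemma linKD u v : f (u + v) = f u + f v.
Proof. by have := hf 1 u v; rewrite scale1r mul1r. Qed.
Lemma linKZ k u : f (k *: u) = k * f u.
Proof. by have := hf k u 0; rewrite addr0 linK0 addr0. Qed.
Lemma linKB u v : f (u - v) = f u - f v.
Proof. by rewrite linKD -scaleN1r linKZ mulN1r. Qed.
End H.

Theorem mainTheorem13 (K : fieldType) (G : zmodType)
  (g : lmodType K) (hom : G -> g -> Prop) (br : g -> g -> g) (alpha : g -> g)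
  (eps : G -> G -> K) (B : g -> g -> K)
  (M : lmodType K) (homM : G -> M -> Prop) (rho : g -> M -> M) (beta : M -> M)
  (D : M -> (M -> K) -> g) :
  [pchar K] =i pred0 ->
  color_hom_lie hom br alpha eps ->
  hom_multiplicative br alpha ->
  quadratic_form hom br alpha eps B ->
  representation hom br alpha eps homM rho beta ->
  (forall x, alpha (alpha x) = x) ->
  (forall m, beta (beta m) = m) ->
  dual_representation hom br alpha eps homM rho beta ->
  (* D : M (x) M^* -> g is even ... *)
  (forall b c m f, homM b m -> dual_hom homM c f -> hom (b + c) (D m f)) ->
  (* ... and B(x, D(m (x) f)) = < rho(alpha x)(m), f > *)
  (forall a b c x m f, hom a x -> homM b m -> dual_hom homM c f ->
     B x (D m f) = eps (a + b) c * f (rho (alpha x) m)) ->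
  forall a b c x m f, hom a x -> homM b m -> dual_hom homM c f ->
    br x (D m f) =
    D (rho x m) (tbeta beta f) + eps a b *: D (beta m) (trho eps rho a x c f).
Proof.
move=> _ [[[Hne Hinv Hepr Hepl] Hgr] [Hbrl [Hbrr Hbrh]] [Hal Hah] Hskew Hjac]
  Hmult [[BlinL BlinR] [Nd1 Nd2] Bsym Binv Bal]
  [HgrM [Hbl Hbh] [Hrl1 [Hrl2 Hrh]] Hrep Hbr] Haa Hbb [Hdr1 Hdr2] HD HBD
  a b c x m f Hx Hm Hf.
have Htb : dual_hom homM c (tbeta beta f).
  split.
    by move=> k u v; rewrite /tbeta Hbl Hf.1.
  by move=> d n hd hn; rewrite /tbeta; apply: Hf.2 hd (Hbh _ _ hn).
have Htr : dual_hom homM (a + c) (trho eps rho a x c f).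
  split.
    by move=> k u v; rewrite /trho Hrl2 Hf.1; ring.
  move=> d n hd hn; rewrite /trho (Hf.2 (a + d)); first by rewrite mulr0 oppr0.
    apply: contra hd => /eqP E; apply/eqP.
    by rewrite -[d](addKr a) E opprD.
  exact: Hrh.
set L := br x (D m f).
set R := D (rho x m) (tbeta beta f) + eps a b *: D (beta m) (trho eps rho a x c f).
have Key : forall e y, hom e y -> B y L = B y R.
  move=> e y hy.
  rewrite /L -Binv (HBD (e + a) b c) //; last exact: Hbrh.
  rewrite Hmult.
  have := Hrep e a (alpha y) (alpha x) (beta m) (Hah _ _ hy) (Hah _ _ Hx).
  rewrite Hbb !Haa => ->.
  rewrite linKB; last exact: Hf.1.
  rewrite linKZ; last exact: Hf.1.
  rewrite /R linKD // linKZ // (HBD e (a + b) c) //; last exact: Hrh.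
  rewrite (HBD e b (a + c)) //; last exact: Hbh.
  rewrite /tbeta /trho Hbr Haa Hbr.
  have Eba : eps b a = (eps a b)^-1.
    by apply: (mulfI (Hne a b)); rewrite Hinv mulfV // (Hne a b).
  rewrite ?Hepl ?Hepr ?Hepl Eba.
  field; exact: Hne.
have Z : forall y, B y (L - R) = 0.
  move=> y; case: Hgr => _ _ _ Hdec; have [s [v [hv ->]]] := Hdec y.
  elim: s => [|s0 s IH].
    by rewrite big_nil (@linK0 _ _ _ (BlinR _)).
  by rewrite big_cons (@linKD _ _ _ (BlinR _)) IH addr0 (@linKB _ _ _ (BlinL _)) (Key s0 _ (hv s0)) subrr.
have := Nd2 (L - R) Z.
by move/eqP; rewrite subr_eq0 => /eqP.
Qed.
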